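(* In the sleeping multi-armed bandit setting, assume the losses are i.i.d.: $(\ell_t)_{t\ge1}$ are i.i.d. random vectors in $[0,1]^K$ with mean vector $\mu=(\mu_1,\dots,\mu_K)$, and for each $t$, $\ell_t$ is independent of everything determined before the learner observes $\ell_t(k_t)$ at round $t$ (in particular of $S_1,\dots,S_t$, of $\ell_1,\dots,\ell_{t-1}$, of $k_1,\dots,k_t$). Let the availability sets $(S_t)$ be arbitrary, where $S_t$ may depend only on $(\ell_s)_{s\le t-1}$ (and past play). Then for any learner (algorithm) and any ordering $\sigma$ of $[K]$, $$\mathbb E\big[R_T^{\mathrm{ordering}}(\sigma)\big]\le\sum_{i=1}^K\sum_{j\in D_i}\mathbb E\big[R_T^{\mathrm{int}}(i\to j)\big],$$ where $D_i=\{j\in[K]:\mu_j\le\mu_i\}$.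
   Context: Sleeping multi-armed bandit setting: $K$ arms $[K]=\{1,\dots,K\}$. At each round $t$ a nonempty availability set $S_t\subseteq[K]$ is revealed, the learner (possibly randomized, using only $S_1,\dots,S_t$, previously observed losses $\ell_s(k_s)$, $s<t$, and internal randomness) selects $k_t\in S_t$ and observes $\ell_t(k_t)$, where $\ell_t\in[0,1]^K$. Internal sleeping regret: $R_T^{\mathrm{int}}(i\to j)=\sum_{t=1}^T\big(\ell_t(k_t)-\ell_t(j)\big)\mathbf 1\{k_t=i,\ j\in S_t\}$ (equal to $0$ when $i=j$). An ordering is a permutation $\sigma=(\sigma_1,\dots,\sigma_K)$ of $[K]$; for nonempty $S\subseteq[K]$, $\sigma(S)=\sigma_m$ where $m=\min\{i:\sigma_i\in S\}$. Ordering regret: $R_T^{\mathrm{ordering}}(\sigma)=\sum_{t=1}^T\big(\ell_t(k_t)-\ell_t(\sigma(S_t))\big)$. *)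

(* Defs.v *)
From HB Require Import structures.
From mathcomp Require Import all_boot all_order all_algebra all_fingroup.
From mathcomp Require Import all_classical all_reals all_analysis.
Set Implicit Arguments. Unset Strict Implicit. Unset Printing Implicit Defensive.
Import Order.TTheory GRing.Theory Num.Theory.
Local Open Scope classical_set_scope.
Local Open Scope ring_scope.

(* Arms are 'I_K (arm i of the paper is the ordinal i-1).  Rounds are t = 1, 2, ... *)

Definition ord_pick (K : nat) (sigma : {perm 'I_K}) (S : {set 'I_K}) : option 'I_K :=
  ohead [seq sigma i | i <- enum 'I_K & sigma i \in S].

Definition int_regret (R : realType) (Omega : Type) (K : nat)
  (ell : nat -> Omega -> 'I_K -> R) (S : nat -> Omega -> {set 'I_K})
  (k : nat -> Omega -> 'I_K) (T : nat) (i j : 'I_K) (w : Omega) : R :=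
  \sum_(1 <= t < T.+1)
     (ell t w (k t w) - ell t w j) * ((k t w == i) && (j \in S t w))%:R.

(* Ordering regret R_T^ordering(sigma) as a function of the outcome w
   (S t w is nonempty under the hypotheses, so the default 0 is never used). *)
Definition ordering_regret (R : realType) (Omega : Type) (K : nat)
  (ell : nat -> Omega -> 'I_K -> R) (S : nat -> Omega -> {set 'I_K})
  (k : nat -> Omega -> 'I_K) (T : nat) (sigma : {perm 'I_K}) (w : Omega) : R :=
  \sum_(1 <= t < T.+1)
     (ell t w (k t w) - oapp (ell t w) 0 (ord_pick sigma (S t w))).

Definition loss_in (R : realType) (Omega : Type) (K : nat)
  (ell : nat -> Omega -> 'I_K -> R) (t : nat) (B : 'I_K -> set R) : set Omega :=
  [set w | forall j, B j (ell t w j)].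

(* Generators of the information available to the learner when choosing k_t:
   its internal randomness (events in F0), the availability sets S_1..S_t, and
   the observed losses l_s(k_s), s < t. *)
Definition learner_info (R : realType) (Omega : Type) (K : nat)
  (ell : nat -> Omega -> 'I_K -> R) (S : nat -> Omega -> {set 'I_K})
  (k : nat -> Omega -> 'I_K) (F0 : set (set Omega)) (t : nat)
  (measR : set R -> Prop) : set (set Omega) :=
  F0
  `|` [set E | exists s A, (1 <= s <= t)%N /\ E = [set w | S s w = A]]
  `|` [set E | exists s B, (1 <= s < t)%N /\ measR B /\
                     E = [set w | B (ell s w (k s w))]].

(* Main.v *)
Require Import Defs.
From HB Require Import structures.
From mathcomp Require Import all_boot all_order all_algebra all_fingroup.
From mathcomp Require Import all_classical all_reals all_analysis.
From mathcomp Require Import measurable_realfun lra.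
Set Implicit Arguments. Unset Strict Implicit. Unset Printing Implicit Defensive.
Import Order.TTheory GRing.Theory Num.Theory.
Local Open Scope classical_set_scope.
Local Open Scope ring_scope.

Section KL.
Variables (R : realType) (d : measure_display) (Omega : measurableType d)
  (P : probability Omega R).

Lemma P_fin (A : set Omega) : measurable A -> P A \is a fin_num.
Proof.
move=> mA; rewrite ge0_fin_numE ?measure_ge0 //.
by rewrite (le_lt_trans (probability_le1 _ mA)) // ltry.
Qed.

Lemma KL (X X1 : Omega -> R) (q : Omega -> bool) (m : R)
  (mX : measurable_fun setT X) (mX1 : measurable_fun setT X1)
  (mA : measurable [set w | q w])
  (X01 : forall w, 0 <= X w <= 1) (X101 : forall w, 0 <= X1 w <= 1)
  (Hi : forall B, measurable B ->
      P ([set w | q w] `&` (X @^-1` B)) = (P [set w | q w] * P (X1 @^-1` B))%E)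
  (Hm : ('E_P[X1] = m%:E)%E) :
  ('E_P[(fun w => (q w)%:R * X w)%R] = P [set w | q w] * m%:E)%E.
Proof.
set A := [set w | q w].
pose phi := fun w => if q w then X w else 2.
pose D := [set y : R | 0 <= y <= 1].
have mD : measurable D by rewrite /D -set_itvcc; exact: measurable_itv.
have mphi : measurable_fun setT phi.
  move=> _ B mB; rewrite setTI.
  have mXB : measurable (X @^-1` B) by rewrite -[X @^-1` B]setTI; exact: mX.
  have [B2|B2] := pselect (B 2).
    have -> : phi @^-1` B = (A `&` X @^-1` B) `|` ~` A.
      apply/seteqP; split => w; rewrite /phi /A /=; case: (q w) => /=; [by left | by right | by case=> [[]//|h]; exfalso; exact: h | by []].
    by apply: measurableU; [apply: measurableI|apply: measurableC].
  have -> : phi @^-1` B = (A `&` X @^-1` B).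
    apply/seteqP; split => w; rewrite /phi /A /=; case: (q w) => //=; by case.
  by apply: measurableI.
have phiD : phi @^-1` D = A.
  apply/seteqP; split => w; rewrite /phi /D /A /=.
    case: (q w) => // /andP[_ h]; have : (1 < 2 :> R) by rewrite ltr1n.
    by rewrite ltNge h.
  by move=> ->; exact: X01.
have E1 : ('E_P[(fun w => (q w)%:R * X w)%R] =
   \int[P]_(w in phi @^-1` D) ((fun y => y%:E) \o phi) w)%E.
  rewrite unlock phiD [RHS]integral_mkcond; apply: eq_integral => w _.
  rewrite /patch /phi /A /= ; case: ifPn => [/set_mem ->|]; first by rewrite mul1r.
  by rewrite notin_setE /= => /negP/negbTE ->; rewrite mul0r.
rewrite E1 -(@ge0_integral_pushforward _ _ _ _ _ phi mphi P D (fun y => y%:E) mD); last 2 first.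
  exact/measurable_EFinP/measurable_id.
  by move=> y; rewrite inE /D /= lee_fin => /andP[].
have Pf := P_fin mA.
pose c : {nonneg R} := NngNum (fine_ge0 (measure_ge0 P A)).
have X1m : X1 \in mfun by rewrite inE.
pose Y : {mfun Omega >-> R} := mfun_Sub X1m.
rewrite (eq_measure_integral (mscale c (distribution P Y))); last first.
  move=> B mB BD; rewrite /= /mscale /= fineK //.
  change (distribution P Y B) with (P (X1 @^-1` B)).
  rewrite -Hi //; congr (P _); apply/seteqP; split => w; rewrite /phi /=.
    case: (q w) => // /BD; rewrite /D /= => /andP[_ h].
    have : (1 < 2 :> R) by rewrite ltr1n.
    by rewrite ltNge h.
  by case=> -> .
rewrite ge0_integral_mscale //; last by move=> y; rewrite /D /= lee_fin => /andP[].
rewrite /= fineK //; congr (_ * _)%E; rewrite -Hm unlock.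
rewrite (@ge0_integral_pushforward _ _ _ _ _ Y (measurable_funP Y) P D (fun y => y%:E) mD) //; last by move=> y; rewrite inE /D /= lee_fin => /andP[].
2: exact/measurable_EFinP/measurable_id.
have -> : Y @^-1` D = setT by apply/seteqP; split => w //= _; exact: X101.
by [].
Qed.

Section Gen.
Variable G : set (set Omega).
Hypothesis HG : sigma_algebra setT G.

Lemma G0 : G set0. Proof. by case: HG. Qed.

Lemma GU A B : G A -> G B -> G (A `|` B).
Proof.
move=> GA GB; rewrite -bigcup2E; case: HG => _ _; apply => -[|[|n]] //=.
exact: G0.
Qed.

Lemma GC A : G A -> G (~` A).
Proof. by move=> GA; rewrite -setTD; case: HG => _ + _; apply. Qed.

Lemma GI A B : G A -> G B -> G (A `&` B).
Proof.
move=> GA GB; rewrite -[A]setCK -[B]setCK -setCU; apply: GC.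
by apply: GU; apply: GC.
Qed.

Lemma Gpred (U : finType) (g : Omega -> U) :
  (forall x, G [set w | g w = x]) -> forall p : pred U, G [set w | p (g w)].
Proof.
move=> Hg p.
suff H : forall s : seq U, G [set w | (g w \in s) && p (g w)].
  have -> : [set w | p (g w)] = [set w | (g w \in enum U) && p (g w)].
    by apply/seteqP; split => w /=; rewrite mem_enum.
  exact: H.
elim => [|x s IH].
  have -> : [set w | (g w \in [::]) && p (g w)] = set0.
    by apply/seteqP; split => w //=.
  exact: G0.
have -> : [set w | (g w \in x :: s) && p (g w)] =
   (if p x then [set w | g w = x] else set0) `|` [set w | (g w \in s) && p (g w)].
  apply/seteqP; split => w /=; rewrite in_cons.
    case/andP => /orP[/eqP gx|hs] px; first by left; rewrite -gx px /=.
    by right; rewrite hs px.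
  case; last by case/andP => -> ->; rewrite orbT.
  by case: ifP => // px ->; rewrite eqxx px.
apply: GU => //; case: ifP => _ //; exact: G0.
Qed.
End Gen.

Lemma IntL (f : Omega -> R) : measurable_fun setT f ->
  (forall w, `|f w| <= 2) -> f \in Lfun P 1.
Proof.
move=> mf fb; apply/Lfun1_integrable.
apply: (@le_integrable _ _ _ P _ measurableT _ (EFin \o cst 2)).
- exact/measurable_EFinP.
- by move=> w _ /=; rewrite lee_fin (le_trans (fb w)) // ler_norm.
- exact: finite_measure_integrable_cst.
Qed.

Lemma Esum (I : eqType) (r : seq I) (Pr : pred I) (f : I -> Omega -> R) :
 (forall i, i \in r -> Pr i -> f i \in Lfun P 1) ->
 (fun w => \sum_(i <- r | Pr i) f i w) \in Lfun P 1 /\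
 ('E_P[(fun w => \sum_(i <- r | Pr i) f i w)%R] = \sum_(i <- r | Pr i) 'E_P[f i])%E.
Proof.
elim: r => [|x r IH] Hf.
  have -> : (fun w => \sum_(i <- [::] | Pr i) f i w) = cst 0.
    by apply/funext => w; rewrite big_nil.
  by rewrite big_nil expectation_cst; split => //; exact: Lfun_cst.
have [IH1 IH2] := IH (fun i ir => Hf i (mem_behead (s := x :: r) ir)).
case Px: (Pr x).
  have fx : f x \in Lfun P 1 by apply: Hf => //; exact: mem_head.
  have -> : (fun w => \sum_(i <- x :: r | Pr i) f i w) =
     f x \+ (fun w => \sum_(i <- r | Pr i) f i w).
    by apply/funext => w; rewrite big_cons Px.
  rewrite big_cons Px expectationD // IH2; split => //.
  exact: rpredD.
have -> : (fun w => \sum_(i <- x :: r | Pr i) f i w) =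
     (fun w => \sum_(i <- r | Pr i) f i w).
  by apply/funext => w; rewrite big_cons Px.
by rewrite big_cons Px.
Qed.

Lemma pick_in K (sigma : {perm 'I_K}) (S : {set 'I_K}) j :
  ord_pick sigma S = Some j -> j \in S.
Proof.
rewrite /ord_pick; case E: [seq _ | _ <- _ & _] => [|a s] //= [<-].
have : a \in [seq sigma i | i <- enum 'I_K & sigma i \in S] by rewrite E mem_head.
by case/mapP => i; rewrite mem_filter => /andP[h _] ->.
Qed.

Lemma pick_some K (sigma : {perm 'I_K}) (S : {set 'I_K}) x :
  x \in S -> exists j, ord_pick sigma S = Some j.
Proof.
move=> xS; rewrite /ord_pick; case E: [seq _ | _ <- _ & _] => [|a s] /=; last by exists a.
have : x \in [seq sigma i | i <- enum 'I_K & sigma i \in S].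
  apply/mapP; exists (sigma^-1 x)%g; last by rewrite permKV.
  by rewrite mem_filter permKV xS mem_enum.
by rewrite E.
Qed.

Lemma sum2_pick K (a b : 'I_K) (h : 'I_K -> 'I_K -> R) :
  \sum_(i < K) \sum_(j < K) ((a == i) && (b == j))%:R * h i j = h a b.
Proof.
rewrite (bigD1 a) //= [X in _ + X]big1 => [|i ia]; last first.
  by apply: big1 => j _; rewrite eq_sym (negbTE ia) mul0r.
rewrite addr0 (bigD1 b) //= !eqxx /= mul1r [X in _ + X]big1 ?addr0 // => j jb.
by rewrite eq_sym (negbTE jb) mul0r.
Qed.

Lemma Esum' (I : eqType) (r : seq I) (f : I -> Omega -> R) :
 (forall i, i \in r -> f i \in Lfun P 1) ->
 (fun w => \sum_(i <- r) f i w) \in Lfun P 1 /\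
 ('E_P[(fun w => \sum_(i <- r) f i w)%R] = \sum_(i <- r) 'E_P[f i])%E.
Proof. by move=> H; apply: (@Esum I r xpredT f) => i ir _; exact: H. Qed.

Variables (K : nat)
  (ell : nat -> Omega -> 'I_K -> R) (S : nat -> Omega -> {set 'I_K})
  (k : nat -> Omega -> 'I_K) (mu : 'I_K -> R)
  (F : nat -> set (set Omega)) (F0 : set (set Omega)).
Hypotheses  (HFsig : forall t, sigma_algebra setT (F t))
  (HFmeas : forall t, F t `<=` measurable)
  (Hl01 : forall t w j, 0 <= ell t w j <= 1)
  (Hlad : forall t j (B : set R), (1 <= t)%N -> measurable B ->
            F t.+1 [set w | B (ell t w j)])
  (HSad : forall t (A : {set 'I_K}), (1 <= t)%N -> F t [set w | S t w = A])
  (Hkad : forall t (i : 'I_K), (1 <= t)%N -> F t [set w | k t w = i])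
  (HkS : forall t w, (1 <= t)%N -> k t w \in S t w)
  (Hindep : forall t (A : set Omega) (B : 'I_K -> set R), (1 <= t)%N ->
     F t A -> (forall j, measurable (B j)) ->
     P (A `&` loss_in ell t B) = (P A * P (loss_in ell t B))%E)
  (Hident : forall t (B : 'I_K -> set R), (1 <= t)%N ->
     (forall j, measurable (B j)) ->
     P (loss_in ell t B) = P (loss_in ell 1 B))
  (Hmean : forall j, ('E_P[fun w => ell 1%N w j] = (mu j)%:E)%E).

Lemma Fset t (p : {set 'I_K} -> 'I_K -> bool) : (1 <= t)%N ->
  F t [set w | p (S t w) (k t w)].
Proof.
move=> t1.
apply: (@Gpred (F t) (HFsig t) _ (fun w => (S t w, k t w)) _ (fun x => p x.1 x.2)).
move=> [A i].
have -> : [set w | (S t w, k t w) = (A, i)] = [set w | S t w = A] `&` [set w | k t w = i].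
  by apply/seteqP; split => w /=; [case=> -> -> | case=> -> ->].
by apply: GI; [exact: HFsig|exact: HSad|exact: Hkad].
Qed.

Lemma mell t j : (1 <= t)%N -> measurable_fun setT (fun w => ell t w j).
Proof. by move=> t1 _ B mB; rewrite setTI; apply: HFmeas; exact: Hlad. Qed.

Lemma KLt t (q : Omega -> bool) j : (1 <= t)%N -> F t [set w | q w] ->
 ('E_P[(fun w => (q w)%:R * ell t w j)%R] = P [set w | q w] * (mu j)%:E)%E.
Proof.
move=> t1 Fq.
apply: (KL (mell j t1) (mell j (leqnn 1)) (HFmeas Fq) _ _ _ (Hmean j)).
- by move=> w; exact: Hl01.
- by move=> w; exact: Hl01.
move=> B mB; pose Bv := fun j' => if j' == j then B else setT.
have mBv : forall j', measurable (Bv j') by move=> j'; rewrite /Bv; case: eqP.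
have HL : forall t', loss_in ell t' Bv = (fun w => ell t' w j) @^-1` B.
  move=> t'; apply/seteqP; split => w /=.
    by move/(_ j); rewrite /Bv eqxx.
  by move=> h j'; rewrite /Bv; case: eqP => [->|].
by rewrite -!HL Hindep // Hident.
Qed.

Lemma mq (q : Omega -> bool) : measurable [set w | q w] ->
  measurable_fun setT (fun w => ((q w)%:R : R)).
Proof.
move=> mA.
have -> : (fun w => ((q w)%:R : R)) = \1_[set w | q w].
  apply/funext => w; rewrite indicE; case qw: (q w).
    by rewrite mem_set.
  by rewrite memNset //= qw.
exact: measurable_indic.
Qed.

Lemma gL1 t (q : Omega -> bool) j : (1 <= t)%N -> F t [set w | q w] ->
  (fun w => (q w)%:R * ell t w j) \in Lfun P 1.
Proof.
move=> t1 Fq; apply: IntL.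
  by apply: measurable_funM; [exact: mq (HFmeas Fq)|exact: mell].
move=> w; have := Hl01 t w j; case: (q w) => /=; rewrite ?mul1r ?mul0r ?normr0 //.
by move=> /andP[h1 h2]; rewrite ger0_norm //; lra.
Qed.

Lemma gL t (q : Omega -> bool) i j : (1 <= t)%N -> F t [set w | q w] ->
  (fun w => (q w)%:R * (ell t w i - ell t w j)) \in Lfun P 1.
Proof.
move=> t1 Fq.
have -> : (fun w => (q w)%:R * (ell t w i - ell t w j)) =
  (fun w => (q w)%:R * ell t w i) \- (fun w => (q w)%:R * ell t w j).
  by apply/funext => w; rewrite /= mulrBr.
by apply: rpredB; exact: gL1.
Qed.

Lemma gE t (q : Omega -> bool) i j : (1 <= t)%N -> F t [set w | q w] ->
  ('E_P[(fun w => (q w)%:R * (ell t w i - ell t w j))%R] =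
   (fine (P [set w | q w]) * (mu i - mu j))%:E)%E.
Proof.
move=> t1 Fq.
have -> : (fun w => (q w)%:R * (ell t w i - ell t w j)) =
  (fun w => (q w)%:R * ell t w i) \- (fun w => (q w)%:R * ell t w j).
  by apply/funext => w; rewrite /= mulrBr.
rewrite expectationB; [|exact: gL1|exact: gL1].
rewrite !KLt // -(fineK (P_fin (HFmeas Fq))) -!EFinM -EFinB mulrBr.
by [].
Qed.

Lemma Etriple (T : nat) (qq : nat -> 'I_K -> 'I_K -> Omega -> bool)
  (HF : forall t i j, (1 <= t)%N -> F t [set w | qq t i j w]) :
  ('E_P[(fun w => \sum_(1 <= t < T.+1) \sum_(i < K) \sum_(j < K)
          (qq t i j w)%:R * (ell t w i - ell t w j))%R] =
   (\sum_(1 <= t < T.+1) \sum_(i < K) \sum_(j < K)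
          fine (P [set w | qq t i j w]) * (mu i - mu j))%:E)%E.
Proof.
have Lj : forall t i, (1 <= t)%N -> _ := fun t i t1 =>
  @Esum' _ (index_enum 'I_K) (fun j w => (qq t i j w)%:R * (ell t w i - ell t w j))
    (fun j _ => gL i j t1 (HF t i j t1)).
have Li : forall t, (1 <= t)%N -> _ := fun t t1 =>
  @Esum' _ (index_enum 'I_K) (fun i w => \sum_(j < K) (qq t i j w)%:R * (ell t w i - ell t w j))
    (fun i _ => (Lj t i t1).1).
have Lt := @Esum' _ (index_iota 1 T.+1)
  (fun t w => \sum_(i < K) \sum_(j < K) (qq t i j w)%:R * (ell t w i - ell t w j)) _.
rewrite (Lt _).2; last first.
  by move=> t; rewrite mem_index_iota => /andP[t1 _]; exact: (Li t t1).1.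
rewrite -sumEFin; apply: eq_big_seq => t; rewrite mem_index_iota => /andP[t1 _].
rewrite (Li t t1).2 -sumEFin; apply: eq_bigr => i _.
rewrite (Lj t i t1).2 -sumEFin; apply: eq_bigr => j _.
exact: (gE i j t1 (HF t i j t1)).
Qed.

Lemma Esingle (T : nat) (qq : nat -> Omega -> bool) i j
  (HF : forall t, (1 <= t)%N -> F t [set w | qq t w]) :
  ('E_P[(fun w => \sum_(1 <= t < T.+1) (qq t w)%:R * (ell t w i - ell t w j))%R] =
   (\sum_(1 <= t < T.+1) fine (P [set w | qq t w]) * (mu i - mu j))%:E)%E.
Proof.
have Lt := @Esum' _ (index_iota 1 T.+1)
  (fun t w => (qq t w)%:R * (ell t w i - ell t w j)) _.
rewrite (Lt _).2; last first.
  by move=> t; rewrite mem_index_iota => /andP[t1 _]; exact: (gL i j t1 (HF t t1)).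
rewrite -sumEFin; apply: eq_big_seq => t; rewrite mem_index_iota => /andP[t1 _].
exact: (gE i j t1 (HF t t1)).
Qed.

Lemma main (T : nat) (sigma : {perm 'I_K}) :
  ('E_P[ordering_regret ell S k T sigma]
    <= \sum_(i < K) \sum_(j < K | (mu j <= mu i)%R) 'E_P[int_regret ell S k T i j])%E.
Proof.
pose qA t i j w := (k t w == i) && (ord_pick sigma (S t w) == Some j).
pose qB t i j w := (k t w == i) && (j \in S t w).
have FA : forall t i j, (1 <= t)%N -> F t [set w | qA t i j w].
  by move=> t i j t1; exact: (Fset (fun A x => (x == i) && (ord_pick sigma A == Some j)) t1).
have FB : forall i j t, (1 <= t)%N -> F t [set w | qB t i j w].
  by move=> i j t t1; exact: (Fset (fun A x => (x == i) && (j \in A)) t1).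
have -> : ordering_regret ell S k T sigma = (fun w => \sum_(1 <= t < T.+1) \sum_(i < K) \sum_(j < K)
          (qA t i j w)%:R * (ell t w i - ell t w j)).
  apply/funext => w; rewrite /ordering_regret; apply: eq_big_nat => t /andP[t1 _].
  have [j0 Hj0] := pick_some sigma (HkS w t1).
  rewrite Hj0 /= -(sum2_pick (k t w) j0 (fun i j => ell t w i - ell t w j)).
  by apply: eq_bigr => i _; apply: eq_bigr => j _; rewrite /qA Hj0.
rewrite (Etriple T FA).
have -> : (\sum_(i < K) \sum_(j < K | (mu j <= mu i)%R) 'E_P[int_regret ell S k T i j] =
   (\sum_(i < K) \sum_(j < K | (mu j <= mu i)%R) \sum_(1 <= t < T.+1)
       fine (P [set w | qB t i j w]) * (mu i - mu j))%:E)%E.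
  rewrite -sumEFin; apply: eq_bigr => i _; rewrite -sumEFin; apply: eq_bigr => j _.
  rewrite -(Esingle T i j (FB i j)); congr ('E_P[_])%E.
  apply/funext => w; rewrite /int_regret; apply: eq_bigr => t _.
  rewrite /qB; case: (eqVneq (k t w) i) => [->|ne] /=.
    by rewrite mulrC.
  by rewrite mulr0n mulr0 mul0r.
rewrite lee_fin exchange_big /=; apply: ler_sum => i _.
rewrite exchange_big /= (bigID (fun j => mu j <= mu i)) /=.
rewrite -[X in _ <= X]addr0; apply: lerD.
  apply: ler_sum => j hj; apply: ler_sum_nat => t /andP[t1 _].
  have mA := HFmeas (FA t i j t1); have mB := HFmeas (FB i j t t1).
  apply: ler_wpM2r; first by rewrite subr_ge0.
  apply: fine_le; [exact: P_fin|exact: P_fin|].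
  apply: le_measure; [exact: mem_set|exact: mem_set|].
  by move=> w; rewrite /qA /qB /= => /andP[-> /eqP h]; rewrite (pick_in h).
apply: sumr_le0 => j hj; apply: sumr_le0 => t _.
by rewrite mulr_ge0_le0 // ?fine_ge0 ?measure_ge0 // subr_le0 ltW // ltNge hj.
Qed.
End KL.

Unset Implicit Arguments.
Theorem lemma2 (R : realType) (d : measure_display) (Omega : measurableType d)
  (P : probability Omega R) (K : nat)
  (ell : nat -> Omega -> 'I_K -> R) (S : nat -> Omega -> {set 'I_K})
  (k : nat -> Omega -> 'I_K) (mu : 'I_K -> R)
  (F : nat -> set (set Omega)) (F0 : set (set Omega))
  (* F t = events determined before the learner observes l_t(k_t) at round t *)
  (HFsig : forall t, sigma_algebra setT (F t))
  (HFmeas : forall t, F t `<=` measurable)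
  (HFmono : forall t, F t `<=` F t.+1)
  (* losses in [0,1]; l_t is determined before round t+1 *)
  (Hl01 : forall t w j, 0 <= ell t w j <= 1)
  (Hlad : forall t j (B : set R), (1 <= t)%N -> measurable B ->
            F t.+1 [set w | B (ell t w j)])
  (* S_t and k_t are determined before the observation of round t *)
  (HSad : forall t (A : {set 'I_K}), (1 <= t)%N -> F t [set w | S t w = A])
  (Hkad : forall t (i : 'I_K), (1 <= t)%N -> F t [set w | k t w = i])
  (* the learner picks an available arm *)
  (HkS : forall t w, (1 <= t)%N -> k t w \in S t w)
  (* the learner only uses its internal randomness F0, S_1..S_t and the
     observed losses l_s(k_s), s < t *)
  (HF0 : F0 `<=` F 1)
  (Hlearner : forall t (i : 'I_K), (1 <= t)%N ->
     <<s learner_info ell S k F0 t measurable >> [set w | k t w = i])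
  (* l_t is independent of everything determined before round t's observation *)
  (Hindep : forall t (A : set Omega) (B : 'I_K -> set R), (1 <= t)%N ->
     F t A -> (forall j, measurable (B j)) ->
     P (A `&` loss_in ell t B) = (P A * P (loss_in ell t B))%E)
  (* the l_t are identically distributed *)
  (Hident : forall t (B : 'I_K -> set R), (1 <= t)%N ->
     (forall j, measurable (B j)) ->
     P (loss_in ell t B) = P (loss_in ell 1 B))
  (* with mean vector mu *)
  (Hmean : forall j, ('E_P[fun w => ell 1%N w j] = (mu j)%:E)%E)
  (T : nat) (sigma : {perm 'I_K}) :
  ('E_P[ordering_regret ell S k T sigma]
    <= \sum_(i < K) \sum_(j < K | (mu j <= mu i)%R) 'E_P[int_regret ell S k T i j])%E.
Proof. by apply: main. Qed.
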